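(* Let $\mathbf{V}$ be a variety of Heyting algebras. If $L\in\mathbf{V}$ is projective in $\mathbf{V}$, then $\mathcal{B}(L)$ is projective in $\rho(\mathbf{V})$.
   Context: Interior algebra: Boolean algebra with operator $g$ satisfying $g(1)=1$, $g(xy)=g(x)g(y)$, $g(x)\le x$, $gg(x)=g(x)$; for an interior algebra $A$, $\mathcal{O}(A)=A^\circ$ is the Heyting algebra of its open elements with $a\Rightarrow b=g(-a+b)$. $\rho(\mathbf{V})$ is the variety of all interior algebras $A$ with $\mathcal{O}(A)\in\mathbf{V}$. For a Heyting algebra $L$, $\mathcal{B}(L)=\langle\mathrm{Fr}(L),g_L\rangle$ with $\mathrm{Fr}(L)$ the free Boolean extension of $L$ and $g_L((-u_1+v_1)\cdots(-u_n+v_n))=(u_1\Rightarrow v_1)\cdots(u_n\Rightarrow v_n)$. *)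

(* Defs.v *)
From Stdlib Require Import List.
Set Implicit Arguments.

Record HSig := {
  hcar : Type;
  hmeet : hcar -> hcar -> hcar;
  hjoin : hcar -> hcar -> hcar;
  himp  : hcar -> hcar -> hcar;
  hbot  : hcar;
  htop  : hcar }.

Definition is_heyting (L : HSig) : Prop :=
  (forall x y z, hmeet L x (hmeet L y z) = hmeet L (hmeet L x y) z) /\
  (forall x y z, hjoin L x (hjoin L y z) = hjoin L (hjoin L x y) z) /\
  (forall x y, hmeet L x y = hmeet L y x) /\
  (forall x y, hjoin L x y = hjoin L y x) /\
  (forall x y, hmeet L x (hjoin L x y) = x) /\
  (forall x y, hjoin L x (hmeet L x y) = x) /\
  (forall x, hmeet L x (htop L) = x) /\
  (forall x, hjoin L x (hbot L) = x) /\
  (forall x, himp L x x = htop L) /\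
  (forall x y, hmeet L x (himp L x y) = hmeet L x y) /\
  (forall x y, hmeet L y (himp L x y) = y) /\
  (forall x y z, himp L x (hmeet L y z) = hmeet L (himp L x y) (himp L x z)).

Inductive hterm : Type :=
  | TVar : nat -> hterm
  | TBot : hterm
  | TTop : hterm
  | TMeet : hterm -> hterm -> hterm
  | TJoin : hterm -> hterm -> hterm
  | TImp : hterm -> hterm -> hterm.

Fixpoint heval (L : HSig) (v : nat -> hcar L) (t : hterm) : hcar L :=
  match t with
  | TVar n => v n
  | TBot => hbot L
  | TTop => htop L
  | TMeet a b => hmeet L (heval L v a) (heval L v b)
  | TJoin a b => hjoin L (heval L v a) (heval L v b)
  | TImp a b => himp L (heval L v a) (heval L v b)
  end.

(* A variety of Heyting algebras is (Birkhoff) the class of Heyting algebras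
   satisfying a set E of equations; we represent V by E. *)
Definition in_V (E : hterm -> hterm -> Prop) (L : HSig) : Prop :=
  is_heyting L /\
  forall s t, E s t -> forall v : nat -> hcar L, heval L v s = heval L v t.

Definition hhom (L M : HSig) (f : hcar L -> hcar M) : Prop :=
  (forall x y, f (hmeet L x y) = hmeet M (f x) (f y)) /\
  (forall x y, f (hjoin L x y) = hjoin M (f x) (f y)) /\
  (forall x y, f (himp L x y) = himp M (f x) (f y)) /\
  f (hbot L) = hbot M /\ f (htop L) = htop M.

Definition projective_in_V (E : hterm -> hterm -> Prop) (L : HSig) : Prop :=
  in_V E L /\
  forall (A B : HSig), in_V E A -> in_V E B ->
  forall f : hcar A -> hcar B, hhom A B f -> (forall y, exists x, f x = y) ->
  forall h : hcar L -> hcar B, hhom L B h ->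
  exists k : hcar L -> hcar A, hhom L A k /\ forall x, f (k x) = h x.

Record BSig := {
  bcar : Type;
  bmeet : bcar -> bcar -> bcar;
  bjoin : bcar -> bcar -> bcar;
  bcompl : bcar -> bcar;
  bbot : bcar;
  btop : bcar }.

Definition is_boolean (B : BSig) : Prop :=
  (forall x y z, bmeet B x (bmeet B y z) = bmeet B (bmeet B x y) z) /\
  (forall x y z, bjoin B x (bjoin B y z) = bjoin B (bjoin B x y) z) /\
  (forall x y, bmeet B x y = bmeet B y x) /\
  (forall x y, bjoin B x y = bjoin B y x) /\
  (forall x y, bmeet B x (bjoin B x y) = x) /\
  (forall x y, bjoin B x (bmeet B x y) = x) /\
  (forall x y z, bmeet B x (bjoin B y z) = bjoin B (bmeet B x y) (bmeet B x z)) /\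
  (forall x y z, bjoin B x (bmeet B y z) = bmeet B (bjoin B x y) (bjoin B x z)) /\
  (forall x, bmeet B x (btop B) = x) /\
  (forall x, bjoin B x (bbot B) = x) /\
  (forall x, bmeet B x (bbot B) = bbot B) /\
  (forall x, bjoin B x (btop B) = btop B) /\
  (forall x, bmeet B x (bcompl B x) = bbot B) /\
  (forall x, bjoin B x (bcompl B x) = btop B).

Definition bhom (A B : BSig) (f : bcar A -> bcar B) : Prop :=
  (forall x y, f (bmeet A x y) = bmeet B (f x) (f y)) /\
  (forall x y, f (bjoin A x y) = bjoin B (f x) (f y)) /\
  (forall x, f (bcompl A x) = bcompl B (f x)) /\
  f (bbot A) = bbot B /\ f (btop A) = btop B.

Definition lathom (L : HSig) (B : BSig) (f : hcar L -> bcar B) : Prop :=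
  (forall x y, f (hmeet L x y) = bmeet B (f x) (f y)) /\
  (forall x y, f (hjoin L x y) = bjoin B (f x) (f y)) /\
  f (hbot L) = bbot B /\ f (htop L) = btop B.

Definition is_free_bool_ext (L : HSig) (B : BSig) (e : hcar L -> bcar B) : Prop :=
  is_boolean B /\ lathom L B e /\
  forall (C : BSig), is_boolean C ->
  forall f : hcar L -> bcar C, lathom L C f ->
  exists fb : bcar B -> bcar C,
    (bhom B C fb /\ forall x, fb (e x) = f x) /\
    forall fb' : bcar B -> bcar C, bhom B C fb' -> (forall x, fb' (e x) = f x) ->
      forall y, fb' y = fb y.

Definition bprod (B : BSig) (l : list (bcar B)) : bcar B :=
  fold_right (bmeet B) (btop B) l.
Definition hprod (L : HSig) (l : list (hcar L)) : hcar L :=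
  fold_right (hmeet L) (htop L) l.

Record IASig := { iba : BSig; ig : bcar iba -> bcar iba }.

Definition is_interior (A : IASig) : Prop :=
  is_boolean (iba A) /\
  ig A (btop (iba A)) = btop (iba A) /\
  (forall x y, ig A (bmeet (iba A) x y) = bmeet (iba A) (ig A x) (ig A y)) /\
  (forall x, bmeet (iba A) (ig A x) x = ig A x) /\
  (forall x, ig A (ig A x) = ig A x).

Definition iahom (A B : IASig) (f : bcar (iba A) -> bcar (iba B)) : Prop :=
  bhom (iba A) (iba B) f /\ forall x, f (ig A x) = ig B (f x).

Section Opens.
Variable A : IASig.
Hypothesis HA : is_interior A.
Local Notation B := (iba A).
Local Notation g := (ig A).
Definition opn := { x : bcar B | g x = x }.

Lemma open_meet (x y : opn) : g (bmeet B (proj1_sig x) (proj1_sig y)) =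
  bmeet B (proj1_sig x) (proj1_sig y).
Proof.
  destruct x as [x hx], y as [y hy]; simpl.
  destruct HA as [_ [_ [Hm _]]]. rewrite Hm, hx, hy. reflexivity.
Qed.

Lemma open_join (x y : opn) : g (bjoin B (proj1_sig x) (proj1_sig y)) =
  bjoin B (proj1_sig x) (proj1_sig y).
Proof.
  destruct x as [x hx], y as [y hy]; simpl.
  destruct HA as [HB [_ [Hm [Hle _]]]].
  destruct HB as [_ [_ [Cm [Cj [Ab1 [_ [D _]]]]]]].
  set (G := g (bjoin B x y)).
  assert (Ex : x = bmeet B x G).
  { unfold G. rewrite <- hx at 1. rewrite <- (Ab1 x y) at 1. rewrite Hm, hx. reflexivity. }
  assert (Ey : y = bmeet B y G).
  { unfold G. rewrite <- hy at 1. rewrite <- (Ab1 y x) at 1. rewrite Hm, hy, Cj. reflexivity. }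
  change (G = bjoin B x y).
  transitivity (bmeet B G (bjoin B x y)). { symmetry; apply Hle. }
  rewrite D, (Cm G x), (Cm G y). rewrite <- Ex. rewrite <- Ey. reflexivity.
Qed.

Lemma open_bot : g (bbot B) = bbot B.
Proof.
  destruct HA as [HB [_ [_ [Hle _]]]].
  destruct HB as [_ [_ [_ [_ [_ [_ [_ [_ [_ [_ [M0 _]]]]]]]]]]].
  rewrite <- (Hle (bbot B)). apply M0.
Qed.

Lemma open_top : g (btop B) = btop B.
Proof. destruct HA as [_ [H _]]. exact H. Qed.

Lemma open_g (x : bcar B) : g (g x) = g x.
Proof. destruct HA as [_ [_ [_ [_ H]]]]. apply H. Qed.

Definition Oalg : HSig := {|
  hcar := opn;
  hmeet := fun x y => exist _ _ (open_meet x y);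
  hjoin := fun x y => exist _ _ (open_join x y);
  himp := fun x y => exist (fun z => g z = z)
            (g (bjoin B (bcompl B (proj1_sig x)) (proj1_sig y))) (open_g _);
  hbot := exist _ _ open_bot;
  htop := exist _ _ open_top |}.
End Opens.

Definition in_rho (E : hterm -> hterm -> Prop) (A : IASig) : Prop :=
  exists HA : is_interior A, in_V E (Oalg HA).

Definition projective_in_rho (E : hterm -> hterm -> Prop) (P : IASig) : Prop :=
  in_rho E P /\
  forall (A B : IASig), in_rho E A -> in_rho E B ->
  forall f : bcar (iba A) -> bcar (iba B), iahom A B f ->
    (forall y, exists x, f x = y) ->
  forall h : bcar (iba P) -> bcar (iba B), iahom P B h ->
  exists k : bcar (iba P) -> bcar (iba A), iahom P A k /\ forall x, f (k x) = h x.

(* Main.v *)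
Require Import Defs.
From Stdlib Require Import List ProofIrrelevance FunctionalExtensionality ClassicalEpsilon.
Import ListNotations.
Set Implicit Arguments.

Lemma sub_eq (T : Type) (P : T -> Prop) (x y : {z | P z}) :
  proj1_sig x = proj1_sig y -> x = y.
Proof. destruct x as [x hx], y as [y hy]; simpl; intros ->. f_equal; apply proof_irrelevance. Qed.

Section Bool.
Variable B : BSig.
Hypothesis HB : is_boolean B.
Local Notation m := (bmeet B).
Local Notation j := (bjoin B).
Local Notation c := (bcompl B).
Local Notation b0 := (bbot B).
Local Notation b1 := (btop B).

Ltac bax := destruct HB as (H1&H2&H3&H4&H5&H6&H7&H8&H9&H10&H11&H12&H13&H14).
Lemma mA x y z : m x (m y z) = m (m x y) z. Proof. bax; auto. Qed.
Lemma jA x y z : j x (j y z) = j (j x y) z. Proof. bax; auto. Qed.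
Lemma mC x y : m x y = m y x. Proof. bax; auto. Qed.
Lemma jC x y : j x y = j y x. Proof. bax; auto. Qed.
Lemma mJ x y : m x (j x y) = x. Proof. bax; auto. Qed.
Lemma jM x y : j x (m x y) = x. Proof. bax; auto. Qed.
Lemma mD x y z : m x (j y z) = j (m x y) (m x z). Proof. bax; auto. Qed.
Lemma jD x y z : j x (m y z) = m (j x y) (j x z). Proof. bax; auto. Qed.
Lemma m1 x : m x b1 = x. Proof. bax; auto. Qed.
Lemma j0 x : j x b0 = x. Proof. bax; auto. Qed.
Lemma m0 x : m x b0 = b0. Proof. bax; auto. Qed.
Lemma j1 x : j x b1 = b1. Proof. bax; auto. Qed.
Lemma mc x : m x (c x) = b0. Proof. bax; auto. Qed.
Lemma jc x : j x (c x) = b1. Proof. bax; auto. Qed.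

Lemma mm x : m x x = x. Proof. rewrite <- (jM x x) at 2. apply mJ. Qed.

Definition le x y := m x y = x.
Lemma le_trans x y z : le x y -> le y z -> le x z.
Proof. unfold le; intros Ha Hb. rewrite <- Ha at 1. rewrite <- mA, Hb. exact Ha. Qed.
Lemma le_ml x y : le (m x y) x.
Proof. unfold le. rewrite mC, mA, mm. reflexivity. Qed.
Lemma le_mr x y : le (m x y) y.
Proof. unfold le. rewrite <- mA, mm. reflexivity. Qed.
Lemma le_glb x y z : le z x -> le z y -> le z (m x y).
Proof. unfold le; intros Ha Hb. rewrite mA, Ha, Hb. reflexivity. Qed.
Lemma le_jl x y : le x (j x y). Proof. apply mJ. Qed.
Lemma le_jr x y : le y (j x y). Proof. unfold le. rewrite jC. apply mJ. Qed.
Lemma le_lub x y z : le x z -> le y z -> le (j x y) z.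
Proof. unfold le; intros Ha Hb. rewrite mC, mD, (mC z x), (mC z y), Ha, Hb. reflexivity. Qed.
Lemma le_mono_m a b a' b' : le a b -> le a' b' -> le (m a a') (m b b').
Proof. intros Ha Hb. apply le_glb; eapply le_trans; [apply le_ml| exact Ha | apply le_mr | exact Hb]. Qed.

Lemma compl_unique a b : m a b = b0 -> j a b = b1 -> b = c a.
Proof.
  intros Ha Hb.
  assert (E1 : b = m b (c a)).
  { rewrite <- (m1 b) at 1. rewrite <- (jc a), mD, (mC b a), Ha, jC, j0. reflexivity. }
  assert (E2 : c a = m (c a) b).
  { rewrite <- (m1 (c a)) at 1. rewrite <- Hb, mD, (mC (c a) a), mc, jC, j0. reflexivity. }
  rewrite E1. rewrite E2 at 2. apply mC.
Qed.
Lemma cc a : c (c a) = a.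
Proof. symmetry. apply compl_unique. rewrite mC; apply mc. rewrite jC; apply jc. Qed.
Lemma c1 : c b1 = b0.
Proof. symmetry. apply compl_unique. apply m0. apply j0. Qed.
Lemma dm_m x y : c (m x y) = j (c x) (c y).
Proof.
  symmetry. apply compl_unique.
  - rewrite mD.
    assert (A1 : m (m x y) (c x) = b0) by (rewrite (mC x y), <- mA, mc, m0; reflexivity).
    assert (A2 : m (m x y) (c y) = b0) by (rewrite <- mA, mc, m0; reflexivity).
    rewrite A1, A2, j0. reflexivity.
  - rewrite jC, jD.
    assert (A1 : j (j (c x) (c y)) x = b1) by (rewrite jC, jA, jc, jC, j1; reflexivity).
    assert (A2 : j (j (c x) (c y)) y = b1) by (rewrite <- jA, (jC (c y) y), jc, j1; reflexivity).
    rewrite A1, A2, m1. reflexivity.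
Qed.
Lemma dm_j x y : c (j x y) = m (c x) (c y).
Proof. rewrite <- (cc (m (c x) (c y))). rewrite dm_m, !cc. reflexivity. Qed.
Lemma shunt a b d : le (m a b) d -> le a (j (c b) d).
Proof.
  intros H.
  assert (Ea : a = j (m a b) (m a (c b))) by (rewrite <- mD, jc, m1; reflexivity).
  rewrite Ea. apply le_lub.
  - eapply le_trans. exact H. apply le_jr.
  - eapply le_trans. apply le_mr. apply le_jl.
Qed.
End Bool.

Section Heyt.
Variable L : HSig.
Hypothesis HL : is_heyting L.
Ltac hax := destruct HL as (H1&H2&H3&H4&H5&H6&H7&H8&H9&H10&H11&H12).
Lemma hA x y z : hmeet L x (hmeet L y z) = hmeet L (hmeet L x y) z. Proof. hax; auto. Qed.
Lemma hC x y : hmeet L x y = hmeet L y x. Proof. hax; auto. Qed.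
Lemma hm1 x : hmeet L x (htop L) = x. Proof. hax; auto. Qed.
Lemma himp_top w : himp L (htop L) w = w.
Proof.
  hax. pose proof (H10 (htop L) w) as E.
  rewrite hC in E. rewrite hm1 in E. rewrite hC, hm1 in E. exact E.
Qed.
Lemma hmeet_imp u v : hmeet L (himp L u v) u = hmeet L u v.
Proof. rewrite hC. hax; auto. Qed.
Lemma hprod_app l1 l2 : hprod L (l1 ++ l2) = hmeet L (hprod L l1) (hprod L l2).
Proof.
  induction l1 as [|a l1 IH]; simpl.
  - rewrite hC, hm1. reflexivity.
  - unfold hprod in *. rewrite IH, hA. reflexivity.
Qed.
End Heyt.

Lemma lathom_hprod L B f : lathom L B f -> forall l, f (hprod L l) = bprod B (map f l).
Proof.
  intros (Hm&Hj&Hb&Ht) l. induction l as [|a l IH]; simpl.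
  - exact Ht.
  - unfold hprod, bprod in *. rewrite Hm, IH. reflexivity.
Qed.

Lemma bhom_bprod A B f : bhom A B f -> forall l, f (bprod A l) = bprod B (map f l).
Proof.
  intros (Hm&Hj&Hc&Hb&Ht) l. induction l as [|a l IH]; simpl.
  - exact Ht.
  - unfold bprod in *. rewrite Hm, IH. reflexivity.
Qed.

Lemma bhom_comp A B C f h : bhom A B f -> bhom B C h -> bhom A C (fun x => h (f x)).
Proof.
  intros (Hm&Hj&Hc&Hb&Ht) (Km&Kj&Kc&Kb&Kt).
  repeat split; intros; rewrite ?Hm, ?Hj, ?Hc, ?Hb, ?Ht, ?Km, ?Kj, ?Kc, ?Kb, ?Kt; reflexivity.
Qed.

Lemma bhom_id A : bhom A A (fun x => x).
Proof. repeat split. Qed.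

Lemma heval_hom L M f : hhom L M f -> forall v t,
  f (heval L v t) = heval M (fun n => f (v n)) t.
Proof.
  intros (Hm&Hj&Hi&Hb&Ht) v t. induction t; simpl;
  rewrite ?Hm, ?Hj, ?Hi, ?Hb, ?Ht, ?IHt1, ?IHt2; reflexivity.
Qed.

Lemma in_V_image E L M f : hhom L M f -> (forall y, exists x, f x = y) ->
  in_V E L -> in_V E M.
Proof.
  intros Hh Hs [HL HE]. pose proof Hh as (Hm&Hj&Hi&Hb&Ht). split.
  - destruct HL as (a1&a2&a3&a4&a5&a6&a7&a8&a9&a10&a11&a12).
    repeat split; intros;
    repeat match goal with y : hcar M |- _ =>
      let y' := fresh "y" in let Hy := fresh "Hy" in
      destruct (Hs y) as [y' Hy]; subst y end;
    rewrite <- ?Ht, <- ?Hb;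
    repeat (rewrite <- Hm || rewrite <- Hj || rewrite <- Hi);
    f_equal;
    first [apply a1|apply a2|apply a3|apply a4|apply a5|apply a6|apply a7|apply a8
          |apply a9|apply a10|apply a11|apply a12].
  - intros s t Hst w.
    set (v := fun n => proj1_sig (constructive_indefinite_description _ (Hs (w n)))).
    assert (Hw : w = fun n => f (v n)).
    { apply functional_extensionality. intro n. unfold v.
      destruct (constructive_indefinite_description _ (Hs (w n))). simpl. auto. }
    rewrite Hw, <- !heval_hom by exact Hh. f_equal. apply HE. exact Hst.
Qed.

Section Core.
Variable L : HSig.
Variable B : BSig.
Variable e : hcar L -> bcar B.
Hypothesis HL : is_heyting L.
Hypothesis hfree : is_free_bool_ext L B e.
Variable g : bcar B -> bcar B.
Hypothesis hg : forall ps : list (hcar L * hcar L),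
        g (bprod B (map (fun p => bjoin B (bcompl B (e (fst p))) (e (snd p))) ps))
        = e (hprod L (map (fun p => himp L (fst p) (snd p)) ps)).

Lemma HB : is_boolean B. Proof. apply hfree. Qed.
Lemma He : lathom L B e. Proof. apply hfree. Qed.
Lemma e_m x y : e (hmeet L x y) = bmeet B (e x) (e y). Proof. apply He. Qed.
Lemma e_j x y : e (hjoin L x y) = bjoin B (e x) (e y). Proof. apply He. Qed.
Lemma e_0 : e (hbot L) = bbot B. Proof. apply He. Qed.
Lemma e_1 : e (htop L) = btop B. Proof. apply He. Qed.

Definition clause (p : hcar L * hcar L) := bjoin B (bcompl B (e (fst p))) (e (snd p)).
Definition cl ps := bprod B (map clause ps).
Definition imps (ps : list (hcar L * hcar L)) := map (fun p => himp L (fst p) (snd p)) ps.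

Lemma g_cl ps : g (cl ps) = e (hprod L (imps ps)).
Proof. apply hg. Qed.

Lemma cl_app ps qs : cl (ps ++ qs) = bmeet B (cl ps) (cl qs).
Proof.
  unfold cl, bprod. induction ps as [|p ps IH]; simpl.
  - rewrite (mC HB), (m1 HB). reflexivity.
  - rewrite IH, (mA HB). reflexivity.
Qed.
Lemma cl_single p : cl [p] = clause p.
Proof. unfold cl, bprod; simpl. apply (m1 HB). Qed.
Lemma clause_e a : e a = clause (htop L, a).
Proof. unfold clause; simpl. rewrite e_1, (c1 HB), (jC HB), (j0 HB). reflexivity. Qed.
Lemma g_e a : g (e a) = e a.
Proof.
  rewrite (clause_e a) at 1. rewrite <- cl_single, g_cl. simpl.
  rewrite (hm1 HL), (himp_top HL). reflexivity.
Qed.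
Lemma g_clause p : g (clause p) = e (himp L (fst p) (snd p)).
Proof. rewrite <- cl_single, g_cl. simpl. rewrite (hm1 HL). reflexivity. Qed.

Definition S x := exists ps, x = cl ps.
Lemma S_meet x y : S x -> S y -> S (bmeet B x y).
Proof. intros [ps ->] [qs ->]. exists (ps ++ qs). symmetry; apply cl_app. Qed.
Lemma S_e a : S (e a).
Proof. exists [(htop L, a)]. rewrite cl_single. apply clause_e. Qed.
Lemma S_top : S (btop B).
Proof. exists []. reflexivity. Qed.

Definition jpair (p q : hcar L * hcar L) := (hmeet L (fst p) (fst q), hjoin L (snd p) (snd q)).
Lemma clause_join p q : bjoin B (clause p) (clause q) = clause (jpair p q).
Proof.
  unfold clause, jpair; simpl. rewrite e_m, e_j, (dm_m HB).
  set (X := bcompl B (e (fst p))). set (Z := bcompl B (e (fst q))).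
  set (b := e (snd p)). set (d := e (snd q)).
  rewrite <- !(jA HB). f_equal.
  rewrite (jA HB Z b d), (jC HB Z b), <- (jA HB). reflexivity.
Qed.
Lemma j_clause_cl p qs : bjoin B (clause p) (cl qs) = cl (map (jpair p) qs).
Proof.
  unfold cl, bprod. induction qs as [|q qs IH]; simpl.
  - apply (j1 HB).
  - rewrite (jD HB), IH, clause_join. reflexivity.
Qed.
Lemma S_join x y : S x -> S y -> S (bjoin B x y).
Proof.
  intros [ps ->] [qs ->]. induction ps as [|p ps IH].
  - exists []. unfold cl at 1, bprod; simpl. rewrite (jC HB), (j1 HB). reflexivity.
  - change (cl (p :: ps)) with (bmeet B (clause p) (cl ps)).
    rewrite (jC HB), (jD HB), (jC HB _ (clause p)), (jC HB _ (cl ps)).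
    apply S_meet. rewrite j_clause_cl. eexists; reflexivity. exact IH.
Qed.
Lemma S_compl x : S x -> S (bcompl B x).
Proof.
  intros [ps ->]. induction ps as [|p ps IH].
  - unfold cl, bprod; simpl. rewrite (c1 HB), <- e_0. apply S_e.
  - change (cl (p :: ps)) with (bmeet B (clause p) (cl ps)).
    rewrite (dm_m HB). apply S_join; [|exact IH].
    unfold clause. rewrite (dm_j HB), (cc HB). apply S_meet. apply S_e.
    exists [(snd p, hbot L)]. rewrite cl_single. unfold clause; simpl.
    rewrite e_0, (j0 HB). reflexivity.
Qed.

Definition SB : BSig := {|
  bcar := {x | S x};
  bmeet := fun x y => exist _ _ (S_meet (proj2_sig x) (proj2_sig y));
  bjoin := fun x y => exist _ _ (S_join (proj2_sig x) (proj2_sig y));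
  bcompl := fun x => exist _ _ (S_compl (proj2_sig x));
  bbot := exist _ (e (hbot L)) (S_e (hbot L));
  btop := exist _ _ S_top |}.

Lemma SB_bool : is_boolean SB.
Proof.
  pose proof HB as (a1&a2&a3&a4&a5&a6&a7&a8&a9&a10&a11&a12&a13&a14).
  repeat split; intros; apply sub_eq; simpl; rewrite ?e_0;
  first [apply a1|apply a2|apply a3|apply a4|apply a5|apply a6|apply a7|apply a8
          |apply a9|apply a10|apply a11|apply a12|apply a13|apply a14].
Qed.

Lemma normal_form x : S x.
Proof.
  destruct hfree as [_ [_ Hu]].
  assert (Hl : lathom L SB (fun a => exist _ (e a) (S_e a))).
  { repeat split; intros; apply sub_eq; simpl; rewrite ?e_m, ?e_j, ?e_1; reflexivity. }
  destruct (Hu SB SB_bool _ Hl) as [fb [[Hfb Hfbe] _]].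
  destruct (Hu B HB e He) as [f0 [_ Hu0]].
  assert (E1 : x = f0 x) by (apply (Hu0 (fun y => y)); [apply bhom_id | reflexivity]).
  assert (E2 : proj1_sig (fb x) = f0 x).
  { apply (Hu0 (fun y => proj1_sig (fb y))).
    - destruct Hfb as (Hm&Hj&Hc&Hb&Ht).
      repeat split; intros; simpl; rewrite ?Hm, ?Hj, ?Hc, ?Hb, ?Ht; simpl; rewrite ?e_0; reflexivity.
    - intro a. rewrite Hfbe. reflexivity. }
  rewrite E1, <- E2. apply proj2_sig.
Qed.

Lemma g_top : g (btop B) = btop B.
Proof. pose proof (g_cl []) as H. simpl in H. rewrite e_1 in H. exact H. Qed.
Lemma e_hprod l : e (hprod L l) = bprod B (map e l).
Proof. apply lathom_hprod, He. Qed.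
Lemma g_meet x y : g (bmeet B x y) = bmeet B (g x) (g y).
Proof.
  destruct (normal_form x) as [ps ->], (normal_form y) as [qs ->].
  rewrite <- cl_app, !g_cl. unfold imps. rewrite map_app, (hprod_app HL), e_m. reflexivity.
Qed.
Lemma g_le x : bmeet B (g x) x = g x.
Proof.
  destruct (normal_form x) as [ps ->]. rewrite g_cl, e_hprod. unfold imps, cl.
  induction ps as [|p ps IH]; simpl.
  - apply (m1 HB).
  - change (le B (bmeet B (e (himp L (fst p) (snd p))) (bprod B (map e (map (fun p => himp L (fst p) (snd p)) ps))))
       (bmeet B (clause p) (bprod B (map clause ps)))).
    apply (le_mono_m HB); [|exact IH].
    unfold clause. apply (shunt HB). unfold le.
    rewrite <- e_m, (hmeet_imp HL), e_m. apply (le_mr HB).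
Qed.
Lemma g_idem x : g (g x) = g x.
Proof. destruct (normal_form x) as [ps ->]. rewrite g_cl. apply g_e. Qed.

Definition P : IASig := {| iba := B; ig := g |}.
Lemma HP : is_interior P.
Proof.
  unfold is_interior; simpl. split; [exact HB|]. split; [exact g_top|].
  split; [exact g_meet|]. split; [exact g_le| exact g_idem].
Qed.
End Core.

Theorem lemma5p3 (E : hterm -> hterm -> Prop) (L : HSig)
  (hL : projective_in_V E L)
  (B : BSig) (e : hcar L -> bcar B) (hfree : is_free_bool_ext L B e)
  (g : bcar B -> bcar B)
  (hg : forall ps : list (hcar L * hcar L),
        g (bprod B (map (fun p => bjoin B (bcompl B (e (fst p))) (e (snd p))) ps))
        = e (hprod L (map (fun p => himp L (fst p) (snd p)) ps))) :
  projective_in_rho E {| iba := B; ig := g |}.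
Proof.
  destruct hL as [hVL hproj].
  pose proof (proj1 hVL) as HL.
  pose proof (HB hfree) as HBB. pose proof (He hfree) as (em&ej&e0&e1).
  split.
  - exists (HP HL hfree g hg).
    apply (in_V_image (L := L) (M := Oalg (HP HL hfree g hg)) (f := fun a => exist (fun z => g z = z) (e a) (g_e HL hfree g hg a))).
    + repeat split; intros; apply sub_eq; simpl; rewrite ?em, ?ej, ?e0, ?e1; try reflexivity.
      symmetry. apply (g_clause HL hfree g hg (x, y)).
    + intros [z hz]. destruct (normal_form hfree z) as [ps Hz].
      exists (hprod L (imps L ps)). apply sub_eq; simpl.
      rewrite <- (g_cl L B e g hg), <- Hz. exact hz.
    + exact hVL.
  - intros A C [HA HVA] [HC HVC] f [fb fg] fsurj h [hb hgc].
    simpl in h, hb, hgc.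
    pose proof fb as (fm&fj&fc&f0&f1).
    pose proof hb as (hm&hj&hc&h0&h1).
    set (f' := fun x : hcar (Oalg HA) => exist (fun z => ig C z = z) (f (proj1_sig x))
                 (eq_trans (eq_sym (fg _)) (f_equal f (proj2_sig x)))
               : hcar (Oalg HC)).
    assert (Hf' : hhom (Oalg HA) (Oalg HC) f').
    { repeat split; intros; apply sub_eq; simpl;
      rewrite ?fm, ?fj, ?fg, ?fj, ?fc, ?f0, ?f1; reflexivity. }
    assert (Hfs : forall y, exists x, f' x = y).
    { intros [z hz]. destruct (fsurj z) as [a ha].
      exists (exist (fun w => ig A w = w) (ig A a) (open_g HA a) : hcar (Oalg HA)). apply sub_eq; simpl.
      rewrite fg, ha. exact hz. }
    assert (hge : forall a, ig C (h (e a)) = h (e a)).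
    { intro a. rewrite <- hgc. rewrite (g_e HL hfree g hg). reflexivity. }
    set (h' := fun a => exist (fun z => ig C z = z) (h (e a)) (hge a) : hcar (Oalg HC)).
    assert (Hh' : hhom L (Oalg HC) h').
    { repeat split; intros; apply sub_eq; simpl; rewrite ?em, ?ej, ?e0, ?e1, ?hm, ?hj, ?h0, ?h1;
      try reflexivity.
      pose proof (g_clause HL hfree g hg (x, y)) as Q; simpl in Q. rewrite <- Q, hgc. unfold clause; simpl.
      rewrite hj, hc. reflexivity. }
    destruct (hproj _ _ HVA HVC f' Hf' Hfs h' Hh') as [k' [Hk' Hk'f]].
    pose proof Hk' as (km&kj&ki&k0&k1).
    set (k := fun a => proj1_sig (k' a)).
    assert (Hk : lathom L (iba A) k).
    { unfold k; repeat split; intros; rewrite ?km, ?kj, ?k0, ?k1; reflexivity. }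
    assert (Hki : forall u v, k (himp L u v) = ig A (bjoin (iba A) (bcompl (iba A) (k u)) (k v))).
    { intros u v. unfold k. rewrite ki. reflexivity. }
    destruct (proj2 (proj2 hfree) (iba A) (proj1 HA) k Hk) as [kb [[Hkb Hkbe] _]].
    exists kb. split.
    + split; [exact Hkb|]. simpl. pose proof Hkb as (kbm&kbj&kbc&kb0&kb1).
      pose proof HA as (_&gA1&gAm&_).
      intro x. destruct (normal_form hfree x) as [ps ->].
      induction ps as [|p ps IH].
      * change (cl L B e []) with (btop B). rewrite (g_top hfree g hg), kb1, gA1. reflexivity.
      * change (cl L B e (p :: ps)) with (bmeet B (clause L B e p) (cl L B e ps)).
        rewrite (g_meet HL hfree g hg), !kbm, IH, gAm. f_equal.
        rewrite (g_clause HL hfree g hg), Hkbe, Hki. unfold clause.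
        rewrite kbj, kbc, !Hkbe. reflexivity.
    + destruct (proj2 (proj2 hfree) (iba C) (proj1 HC) (fun a => h (e a))) as [fb0 [_ Hu]].
      { repeat split; intros; rewrite ?em, ?ej, ?e0, ?e1, ?hm, ?hj, ?h0, ?h1; reflexivity. }
      assert (Hext : forall a, f (kb (e a)) = h (e a)).
      { intro a. rewrite Hkbe. unfold k.
        pose proof (f_equal (@proj1_sig _ _) (Hk'f a)) as Q. simpl in Q. exact Q. }
      intro x. rewrite (Hu (fun y => f (kb y)) (bhom_comp Hkb fb) Hext x).
      rewrite (Hu h hb (fun a => eq_refl) x). reflexivity.
Qed.
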